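(* Let $U$ be a nonempty finite set, $R\subseteq U\times U$ serial and transitive, $h$ the height function of $(Reg(U,R),\subseteq)$, and let $M(Reg(U,R))$ be the matroid on $U$ whose independent sets are $\mathbf{I}(Reg(U,R);h)$, with rank function $r$. Then for every $X\subseteq U$, $$r(X)=\min_{Y\in Reg(U,R)}\{h(Y)+|X\setminus Y|\}.$$
   Context: $R_s(x)=\{y\in U\mid xRy\}$; $\underline{R}(X)=\{x\mid R_s(x)\subseteq X\}$, $\overline{R}(X)=\{x\mid R_s(x)\cap X\neq\emptyset\}$; $X$ is regular if $X=\underline{R}(\overline{R}(X))$, and $Reg(U,R)$ is the lattice of regular sets under inclusion, with least element $\emptyset$. $h(A)$ is the length of a maximal chain in $[\emptyset,A]$. $\mathbf{I}(Reg(U,R);h)=\{X\subseteq U\mid h(Y)\ge|X\cap Y|\ \forall Y\in Reg(U,R)\}$. The rank function of a matroid is $r(X)=\max\{|I|\mid I\subseteq X,\ I\text{ independent}\}$. *)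

(* Defs.v *)
From mathcomp Require Import all_boot.
Set Implicit Arguments. Unset Strict Implicit. Unset Printing Implicit Defensive.

Section Rough.
Variable T : finType.
Variable R : rel T.

Definition Rs (x : T) : {set T} := [set y | R x y].
Definition lowerR (X : {set T}) : {set T} := [set x | Rs x \subset X].
Definition upperR (X : {set T}) : {set T} := [set x | Rs x :&: X != set0].
Definition regular (X : {set T}) : bool := X == lowerR (upperR X).

Definition serial : Prop := forall x, exists y, R x y.
Definition transitiveR : Prop := forall x y z, R x y -> R y z -> R x z.

Definition reg_chain_in (A : {set T}) (C : {set {set T}}) : bool :=
  [forall Y in C, regular Y && (Y \subset A)] &&
  [forall Y in C, forall Z in C, (Y \subset Z) || (Z \subset Y)].

(* height h(A): length (= number of elements minus one) of a longest chain
   of regular sets in [emptyset, A] *)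
Definition height (A : {set T}) : nat :=
  \max_(C : {set {set T}} | reg_chain_in A C) (#|C|).-1.

Definition indepR (X : {set T}) : bool :=
  [forall Y : {set T}, regular Y ==> (#|X :&: Y| <= height Y)].

Definition rankR (X : {set T}) : nat :=
  \max_(I : {set T} | (I \subset X) && indepR I) #|I|.

End Rough.

(* Main.v *)
Require Import Defs.
From mathcomp Require Import all_boot zify.
Set Implicit Arguments. Unset Strict Implicit. Unset Printing Implicit Defensive.

Section S.
Variable T : finType.
Variable R : rel T.
Hypothesis hser : serial R.
Hypothesis htr : transitiveR R.

Definition term (t : T) := [forall s, R t s ==> R s t].
Definition cl (Y : {set T}) : {set {set T}} := Rs R @: [set t in Y | term t].
Definition Cls := cl setT.
Definition D (S : {set {set T}}) : {set T} :=
  [set x | [forall t, (term t && R x t) ==> (Rs R t \in S)]].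

Lemma termP t : reflect (forall s, R t s -> R s t) (term t).
Proof. by apply: (iffP forallP) => H s; [move=> Hs; exact: (implyP (H s)) | apply/implyP; apply: H]. Qed.

Lemma term_refl t : term t -> R t t.
Proof. move/termP=> H; have [y Hy] := hser t; exact: htr Hy (H _ Hy). Qed.

Lemma term_succ t s : term t -> R t s -> term s.
Proof.
move=> /termP Ht Hts; apply/termP => u Hsu.
exact: htr (Ht _ (htr Hts Hsu)) Hts.
Qed.

Lemma term_Rs t s : term t -> R t s -> Rs R s = Rs R t.
Proof.
move=> Ht Hts; have Hst := (termP _ Ht) _ Hts.
apply/setP => u; rewrite !inE; apply/idP/idP => H.
- exact: htr Hts H.
- exact: htr Hst H.
Qed.

Lemma inRs t s : (s \in Rs R t) = R t s.
Proof. by rewrite inE. Qed.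

Lemma exists_term x : exists2 t, term t & R x t.
Proof.
have [y0 Hy0] := hser x.
case: (arg_minnP (fun y => #|Rs R y|) Hy0) => t Hxt Hmin.
have [u Htu] := hser t.
have Hxu : R x u := htr Hxt Htu.
have sub : forall a b, R a b -> Rs R b \subset Rs R a.
  by move=> a b Hab; apply/subsetP => z; rewrite !inE => Hbz; exact: htr Hab Hbz.
have equ : forall v, R x v -> Rs R v \subset Rs R t -> Rs R v = Rs R t.
  move=> v Hxv Hs; apply/eqP; rewrite eqEcard Hs /=; exact: Hmin.
have Eu := equ u Hxu (sub _ _ Htu).
exists u => //; apply/termP => s Hus.
have Es := equ s (htr Hxu Hus) (subset_trans (sub _ _ Hus) (sub _ _ Htu)).
have : u \in Rs R s by rewrite Es inRs.
by rewrite inE.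
Qed.

Lemma DP (S : {set {set T}}) x : reflect (forall t, term t -> R x t -> Rs R t \in S) (x \in D S).
Proof.
rewrite inE; apply: (iffP forallP) => H t.
- by move=> Ht Hxt; apply: (implyP (H t)); rewrite Ht.
- by apply/implyP => /andP[]; apply: H.
Qed.

Lemma term_inD (S : {set {set T}}) t : term t -> (t \in D S) = (Rs R t \in S).
Proof.
move=> Ht; apply/DP/idP => [H| H s Hs Hts]; first exact: H (term_refl Ht).
by rewrite (term_Rs Ht Hts).
Qed.

Lemma luP (Y : {set T}) x :
  reflect (forall y, R x y -> exists2 z, R y z & z \in Y) (x \in lowerR R (upperR R Y)).
Proof.
rewrite inE; apply: (iffP subsetP) => H y.
- move=> Hxy; have := H y; rewrite !inE => /(_ Hxy) /set0Pn [z].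
  by rewrite !inE => /andP[] ? ?; exists z.
- rewrite !inE => /H [z Hyz Hz]; apply/set0Pn; exists z; by rewrite !inE Hyz.
Qed.

Lemma D_regular (S : {set {set T}}) : regular R (D S).
Proof.
apply/eqP/setP => x; apply/idP/luP.
- move=> /DP Hx y Hxy; have [t Ht Hyt] := exists_term y.
  exists t => //; rewrite term_inD //; exact: Hx _ Ht (htr Hxy Hyt).
- move=> H; apply/DP => t Ht Hxt; have [z Htz Hz] := H t Hxt.
  have Hz' := term_succ Ht Htz.
  by rewrite -(term_Rs Ht Htz) -term_inD.
Qed.

Lemma regular_D (Y : {set T}) : regular R Y -> Y = D (cl Y).
Proof.
move=> /eqP E; apply/setP => x; rewrite {1}E; apply/luP/DP.
- move=> H t Ht Hxt; have [z Htz Hz] := H t Hxt.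
  apply/imsetP; exists z; first by rewrite inE Hz (term_succ Ht Htz).
  by rewrite (term_Rs Ht Htz).
- move=> H y Hxy; have [t Ht Hyt] := exists_term y.
  have /imsetP [t' ] := H t Ht (htr Hxy Hyt).
  rewrite inE => /andP [Ht'Y Ht'] Ee.
  exists t' => //; apply: htr Hyt _; by rewrite -inRs Ee inRs term_refl.
Qed.

Lemma D_mono (S S' : {set {set T}}) : S \subset S' -> D S \subset D S'.
Proof.
move=> /subsetP H; apply/subsetP => x /DP Hx; apply/DP => t Ht Hxt; exact: H (Hx t Ht Hxt).
Qed.

Lemma DI (S S' : {set {set T}}) : D (S :&: S') = D S :&: D S'.
Proof.
apply/setP => x; rewrite in_setI; apply/DP/andP.
- by move=> H; split; apply/DP => t Ht Hxt; have := H t Ht Hxt; rewrite inE => /andP[].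
- by move=> [/DP H1 /DP H2] t Ht Hxt; rewrite inE H1 ?H2.
Qed.

Lemma clD (S : {set {set T}}) : cl (D S) \subset S :&: Cls.
Proof.
apply/subsetP => c /imsetP [t]; rewrite inE => /andP [HtD Ht] ->.
rewrite in_setI -term_inD // HtD /=; rewrite /Cls /cl; apply/imsetP; exists t => //; by rewrite !inE Ht.
Qed.

Lemma cl_mono (Y Z : {set T}) : Y \subset Z -> cl Y \subset cl Z.
Proof.
move=> /subsetP H; apply/subsetP => c /imsetP [t]; rewrite inE => /andP [HY Ht] ->.
apply/imsetP; exists t => //; by rewrite inE H.
Qed.


Lemma chain_ex n : forall S : {set {set T}}, #|S| = n -> S \subset Cls ->
  exists C : {set {set T}},
  [/\ forall Z, Z \in C -> regular R Z && (Z \subset D S),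
      forall Z Z', Z \in C -> Z' \in C -> (Z \subset Z') || (Z' \subset Z)
    & #|C| = n.+1].
Proof.
elim: n => [|n IH] S HS HSC.
- exists [set D S]; split.
  + by move=> Z /set1P ->; rewrite D_regular subxx.
  + by move=> Z Z' /set1P -> /set1P ->; rewrite subxx.
  + by rewrite cards1.
- have : 0 < #|S| by rewrite HS.
  rewrite card_gt0 => /set0Pn [c Hc].
  have HS' : #|S :\ c| = n by move: HS; rewrite (cardsD1 c) Hc; case.
  have [C' [H1 H2 H3]] := IH _ HS' (subset_trans (subsetDl _ _) HSC).
  have sub' : D (S :\ c) \subset D S by apply: D_mono; exact: subsetDl.
  exists (D S |: C'); split.
  + move=> Z /setU1P [->| HZ]; first by rewrite D_regular subxx.
    by have /andP [-> HZs] := H1 Z HZ; rewrite (subset_trans HZs sub').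
  + have HsubDS : forall Z, Z \in C' -> Z \subset D S.
      by move=> Z HZ; have /andP [_ HZs] := H1 Z HZ; exact: subset_trans HZs sub'.
    move=> Z Z' /setU1P [->| HZ] /setU1P [->| HZ'].
    * by rewrite subxx.
    * by rewrite HsubDS ?orbT.
    * by rewrite HsubDS.
    * exact: H2.
  + rewrite cardsU1 H3; suff -> : D S \notin C' by [].
    apply/negP => HDC.
    have : c \in Cls by move/subsetP: HSC; apply.
    case/imsetP => t; rewrite !inE => Ht Ec.
    have /andP [_ Hsub] := H1 _ HDC.
    have : t \in D S by rewrite term_inD // -Ec.
    move/(subsetP Hsub); rewrite term_inD // -Ec !inE eqxx //.
Qed.

Lemma height_D (S : {set {set T}}) : height R (D S) = #|S :&: Cls|.
Proof.
apply/eqP; rewrite eqn_leq; apply/andP; split.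
- apply/bigmax_leqP => C /andP [/forallP H1 /forallP H2].
  have H1' : forall Z, Z \in C -> regular R Z && (Z \subset D S).
    by move=> Z HZ; exact: (implyP (H1 Z)) HZ.
  have H2' : forall Z Z', Z \in C -> Z' \in C -> (Z \subset Z') || (Z' \subset Z).
    by move=> Z Z' HZ HZ'; have := implyP (H2 Z) HZ => /forallP /(_ Z') /implyP; apply.
  have bnd : forall Z, Z \in C -> #|cl Z| < #|S :&: Cls|.+1.
    move=> Z /H1' /andP [_ HZ]; rewrite ltnS; apply: subset_leq_card.
    exact: subset_trans (cl_mono HZ) (clD S).
  pose f (Z : {set T}) : 'I_(#|S :&: Cls|).+1 := inord #|cl Z|.
  suff : #|C| <= #|S :&: Cls|.+1 by case: #|C|.
  rewrite -(@card_in_imset _ _ f C); last first.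
    move=> Z Z' HZ HZ' /(congr1 (@nat_of_ord _)); rewrite /f !inordK ?bnd // => Ecard.
    have key : forall A B, A \in C -> B \in C -> A \subset B -> #|cl A| = #|cl B| -> A = B.
      move=> A B HA HB sAB Ec.
      have : cl A == cl B by rewrite eqEcard cl_mono // Ec leqnn.
      move/eqP => EAB.
      have /andP [rA _] := H1' A HA; have /andP [rB _] := H1' B HB.
      by rewrite (regular_D rA) (regular_D rB) EAB.
    by case/orP: (H2' Z Z' HZ HZ') => s; [apply: key | symmetry; apply: key].
  by rewrite -[X in _ <= X]card_ord; apply: max_card.
- have [C [H1 H2 H3]] := chain_ex (erefl _) (subsetIr S Cls).
  have -> : #|S :&: Cls| = #|C|.-1 by rewrite H3.
  apply: leq_bigmax_cond; apply/andP; split.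
  + apply/forallP => Z; apply/implyP => /H1 /andP [-> HZ] /=.
    apply: subset_trans HZ _; apply: D_mono; exact: subsetIl.
  + apply/forallP => Z; apply/implyP => HZ; apply/forallP => Z'; apply/implyP => HZ'.
    exact: H2.
Qed.


Lemma submod (Y1 Y2 : {set T}) : regular R Y1 -> regular R Y2 ->
  exists J, [/\ regular R J, Y1 :|: Y2 \subset J, regular R (Y1 :&: Y2)
   & height R J + height R (Y1 :&: Y2) = height R Y1 + height R Y2].
Proof.
move=> r1 r2; have E1 := regular_D r1; have E2 := regular_D r2.
move: (cl Y1) (cl Y2) E1 E2 => S1 S2 -> ->.
exists (D (S1 :|: S2)); split.
- exact: D_regular.
- by rewrite subUset !D_mono // ?subsetUl ?subsetUr.
- by rewrite -DI D_regular.
- rewrite -DI !height_D setIUl (_ : S1 :&: S2 :&: Cls = (S1 :&: Cls) :&: (S2 :&: Cls)) ?cardsUI //.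
  by rewrite setIACA setIid.
Qed.

Lemma cnt (P Q Y Y2 : {set T}) :
  #|(P :|: Q) :\: (Y :|: Y2)| + #|(P :&: Q) :\: (Y :&: Y2)| <= #|P :\: Y| + #|Q :\: Y2|.
Proof.
rewrite -cardsUI -[X in _ <= X]cardsUI leq_add // subset_leq_card //;
  apply/subsetP => z; rewrite !inE;
  by case: (z \in P); case: (z \in Q); case: (z \in Y); case: (z \in Y2).
Qed.

Lemma diff_mono (A B Z W : {set T}) : A \subset B -> Z \subset W -> #|A :\: W| <= #|B :\: Z|.
Proof.
move=> sAB sZW; apply: subset_leq_card; apply/subsetP => z; rewrite !inE => /andP [nW zA].
rewrite (subsetP sAB _ zA) andbT; apply/negP => zZ; by rewrite (subsetP sZW _ zZ) in nW.
Qed.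

Lemma indepE (I : {set T}) :
  indepR R I <-> forall Y, regular R Y -> #|I| <= height R Y + #|I :\: Y|.
Proof.
split.
- move=> /forallP H Y rY; have := implyP (H Y) rY.
  by rewrite -(cardsID Y I) leq_add2r.
- move=> H; apply/forallP => Y; apply/implyP => rY.
  by have := H Y rY; rewrite -(cardsID Y I) leq_add2r.
Qed.

Definition Ym (A : {set T}) :=
  [arg min_(Y < D set0 | regular R Y) (height R Y + #|A :\: Y|)].
Definition g A := height R (Ym A) + #|A :\: Ym A|.

Lemma YmP A : regular R (Ym A) /\ forall Y, regular R Y -> g A <= height R Y + #|A :\: Y|.
Proof.
rewrite /g /Ym; case: arg_minnP; first exact: D_regular.
by move=> Y rY H; split.
Qed.

Lemma main n : forall A : {set T}, #|A| = n ->
  exists I : {set T}, [/\ I \subset A, indepR R I & #|I| = g A].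
Proof.
elim: n => [|n IH] A HA.
- move/eqP: HA; rewrite cards_eq0 => /eqP ->.
  exists set0; split => //.
  + by apply/forallP => Y; apply/implyP => _; rewrite set0I cards0.
  + have [_ H] := YmP set0; have := H _ (D_regular set0).
    by rewrite height_D set0I cards0 set0D cards0; case: (g set0).
- have : 0 < #|A| by rewrite HA.
  rewrite card_gt0 => /set0Pn [x Hx].
  have HA' : #|A :\ x| = n by move: HA; rewrite (cardsD1 x) Hx; case.
  have [I' [sI' iI' cI']] := IH _ HA'.
  have [rYA minA] := YmP A.
  have [rYA' minA'] := YmP (A :\ x).
  have le1 : g (A :\ x) <= g A.
    apply: leq_trans (minA' _ rYA) _; rewrite /g leq_add2l.
    exact: diff_mono (subsetDl _ _) (subxx _).
  have le2 : g A <= g (A :\ x) + 1.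
    apply: leq_trans (minA _ rYA') _; rewrite /g -addnA leq_add2l.
    have : A :\: Ym (A :\ x) \subset x |: ((A :\ x) :\: Ym (A :\ x)).
      by apply/subsetP => z; rewrite !inE; case: (z == x) => //= /andP [-> ->].
    move/subset_leq_card; rewrite cardsU1 addnC => H; apply: leq_trans H _.
    by rewrite leq_add2l leq_b1.
  have nxI' : x \notin I' by apply/negP => /(subsetP sI'); rewrite !inE eqxx.
  have sA' : A :\ x \subset A by exact: subsetDl.
  case: (ltnP (g (A :\ x)) (g A)) => Hlt; last first.
    by exists I'; split => //; [exact: subset_trans sI' sA' | rewrite cI'; apply/eqP; rewrite eqn_leq le1 Hlt].
  have EgA : g A = g (A :\ x) + 1 by apply/eqP; rewrite eqn_leq le2 addn1 Hlt.
  have cI : #|x |: I'| = #|I'| + 1 by rewrite cardsU1 nxI' addnC.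
  exists (x |: I'); split.
  + by rewrite subUset sub1set Hx (subset_trans sI' sA').
  + apply/indepE => Y rY.
    have [J [rJ sJ rYI Eh]] := submod rY rYA'.
    have c1 := cnt (x |: I') (A :\ x) Y (Ym (A :\ x)).
    have c2 : #|A :\: J| <= #|((x |: I') :|: (A :\ x)) :\: (Y :|: Ym (A :\ x))|.
      apply: diff_mono sJ; apply/subsetP => z zA; rewrite !inE.
      by case: (z == x) => //=; rewrite zA orbT.
    have c3 : #|I' :\: (Y :&: Ym (A :\ x))| <= #|((x |: I') :&: (A :\ x)) :\: (Y :&: Ym (A :\ x))|.
      apply: diff_mono (subxx _); by rewrite subsetI subsetUr sI'.
    have c4 := minA _ rJ.
    have c5 := (proj1 (indepE I') iI') _ rYI.
    have Eg' : g (A :\ x) = height R (Ym (A :\ x)) + #|(A :\ x) :\: Ym (A :\ x)| by [].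
    rewrite cI cI'. move: EgA c1 c2 c3 c4 c5 Eh Eg'. rewrite -cI'. lia.
  + by rewrite cI cI' EgA.
Qed.

End S.

Theorem proposition3 (T : finType) (R : rel T)
  (hne : 0 < #|T|) (hser : serial R) (htr : transitiveR R) (X : {set T}) :
  (forall Y : {set T}, regular R Y -> rankR R X <= height R Y + #|X :\: Y|) /\
  (exists2 Y : {set T}, regular R Y & rankR R X = height R Y + #|X :\: Y|).
Proof.
have P1 : forall Y : {set T}, regular R Y -> rankR R X <= height R Y + #|X :\: Y|.
  move=> Y rY; apply/bigmax_leqP => I /andP [sIX iI].
  apply: leq_trans ((proj1 (@indepE _ R I) iI) Y rY) _.
  by rewrite leq_add2l; apply: diff_mono sIX (subxx _).
split => //.
have [rYX _] := YmP hser htr X.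
exists (Ym R X) => //.
apply/eqP; rewrite eqn_leq P1 //=.
have [I [sI iI cI]] := main hser htr (erefl #|X|).
rewrite /g in cI; rewrite -cI.
rewrite /rankR; apply: (leq_bigmax_cond I); by rewrite sI iI.
Qed.
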